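(* Under the standing assumptions below, and for $x$ sufficiently large (in terms of $\epsilon$), if $|U|\geq 2$ then all elements of $A$ are even and there exists $a\in\{1,\dots,8\}$ such that for every $n\in A$: $n\equiv 2\pmod 4\iff n\equiv a\pmod 9$, and $n\equiv 0\pmod 4\iff n\equiv -a\pmod 9$.
   Context: Standing assumptions and notation: $\epsilon>0$ is fixed, $\delta_0=\frac14-\frac{2}{\pi^2}$, and $A\subseteq[1,x]\cap\mathbb{N}$ is a set with $|A|>(\delta_0+\epsilon)x$ such that $A+A=\{a+b:a,b\in A\}$ contains no squarefree integer, and $A$ is not a subset of $4\mathbb{N}$, nor of $9\mathbb{N}$, nor of $\{n\in\mathbb{N}:n\equiv 2\pmod 4\}$. For $a\in\{0,\dots,35\}$ put $\delta_a=\frac{36\cdot\#\{n\in A: n\equiv a\pmod{36}\}}{x}$. Let $U$ be the set of residues $a\bmod 36$ with $\delta_a>1-\frac{9}{\pi^2}+\epsilon/100$, let $V$ be the set of residues $a\bmod 36$ with $\delta_a>0$, and let $Q=\{0,4,8,9,12,16,18,20,24,27,28,32\}$ (the residue classes mod $36$ containing no squarefree integers). *)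

(* Defs.v *)
From Stdlib Require Import Reals Lra Lia Arith List.
Open Scope R_scope.

Definition squarefree (n : nat) : Prop :=
  (1 <= n)%nat /\ forall d : nat, Nat.divide (d * d) n -> d = 1%nat.

Definition delta0 : R := / 4 - 2 / (PI ^ 2).

(* A is a finite set of naturals, represented as a duplicate-free list. *)
Definition count_res (A : list nat) (a : nat) : nat :=
  length (filter (fun n => Nat.eqb (n mod 36) a) A).

Definition delta (x : R) (A : list nat) (a : nat) : R :=
  36 * INR (count_res A a) / x.

Definition inU (eps x : R) (A : list nat) (a : nat) : Prop :=
  (a < 36)%nat /\ delta x A a > 1 - 9 / (PI ^ 2) + eps / 100.

(* Main.v *)
Require Import Defs.
From Stdlib Require Import Reals Lra Lia Arith List Classical.
Open Scope R_scope.

Fixpoint rsum (f : nat -> R) (n : nat) : R :=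
  match n with O => 0 | S m => rsum f m + f m end.

Lemma rsum_ext f g n : (forall k, (k < n)%nat -> f k = g k) -> rsum f n = rsum g n.
Proof. induction n; simpl; intros H; [reflexivity|]. rewrite IHn by (intros; apply H; lia). rewrite H by lia. reflexivity. Qed.

Lemma rsum_le f g n : (forall k, (k < n)%nat -> f k <= g k) -> rsum f n <= rsum g n.
Proof. induction n; simpl; intros H; [lra|]. assert (rsum f n <= rsum g n) by (apply IHn; intros; apply H; lia). assert (f n <= g n) by (apply H; lia). lra. Qed.

Lemma rsum_plus f g n : rsum (fun k => f k + g k) n = rsum f n + rsum g n.
Proof. induction n; simpl; [lra|]. rewrite IHn. lra. Qed.

Lemma rsum_scal c f n : rsum (fun k => c * f k) n = c * rsum f n.
Proof. induction n; simpl; [lra|]. rewrite IHn. lra. Qed.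

Lemma rsum_zero n : rsum (fun _ => 0) n = 0.
Proof. induction n; simpl; lra. Qed.

Lemma rsum_nonneg f n : (forall k, (k < n)%nat -> 0 <= f k) -> 0 <= rsum f n.
Proof. intros H. rewrite <- (rsum_zero n). apply rsum_le; auto. Qed.

Lemma rsum_front f n : rsum f (S n) = f 0%nat + rsum (fun k => f (S k)) n.
Proof. induction n; simpl in *; [lra|]. rewrite IHn. lra. Qed.

Lemma rsum_app f a b : rsum f (a + b) = rsum f a + rsum (fun k => f (a + k)%nat) b.
Proof. induction b; simpl. - rewrite Nat.add_0_r. lra. - rewrite Nat.add_succ_r. simpl. rewrite IHb. lra. Qed.

Lemma rsum_rev f n : rsum (fun k => f (n - 1 - k)%nat) n = rsum f n.
Proof.
  revert f; induction n as [|m IH]; intros f; [reflexivity|].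
  rewrite (rsum_front (fun k => f (S m - 1 - k)%nat)).
  replace (rsum (fun k => f (S m - 1 - S k)%nat) m) with (rsum (fun k => f (m-1-k)%nat) m)
    by (apply rsum_ext; intros; f_equal; lia).
  rewrite IH. simpl. replace (m-0-0)%nat with m by lia. lra.
Qed.

Lemma rsum_mono f a b : (a <= b)%nat -> (forall k, 0 <= f k) -> rsum f a <= rsum f b.
Proof. intros Hab H. replace b with (a + (b - a))%nat by lia. rewrite rsum_app.
  assert (0 <= rsum (fun k => f (a + k)%nat) (b - a)) by (apply rsum_nonneg; auto). lra. Qed.

Lemma rsum_3 f M : rsum f (3*M) = rsum (fun t => f (3*t)%nat + f (3*t+1)%nat + f (3*t+2)%nat) M.
Proof. induction M; [reflexivity|]. replace (3 * S M)%nat with (3*M + 3)%nat by lia.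
  rewrite rsum_app, IHM. simpl. rewrite !Nat.add_0_r. replace (3*M)%nat with (M+(M+(M+0)))%nat by lia. simpl. lra. Qed.

Lemma rsum_2 f M : rsum f (2*M) = rsum (fun t => f (2*t)%nat + f (2*t+1)%nat) M.
Proof. induction M; [reflexivity|]. replace (2 * S M)%nat with (2*M + 2)%nat by lia.
  rewrite rsum_app, IHM. simpl. rewrite !Nat.add_0_r. replace (2*M)%nat with (M+(M+0))%nat by lia. simpl. lra. Qed.

Ltac modlia :=
  repeat match goal with
  | |- context [Nat.modulo ?x ?k] =>
      let H := fresh in let H2 := fresh in
      assert (H := Nat.div_mod_eq x k); assert (H2 : lt (Nat.modulo x k) k) by (apply Nat.mod_upper_bound; lia);
      generalize dependent (Nat.modulo x k); generalize dependent (Nat.div x k); intros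
  | H0 : context [Nat.modulo ?x ?k] |- _ =>
      let H := fresh in let H2 := fresh in
      assert (H := Nat.div_mod_eq x k); assert (H2 : lt (Nat.modulo x k) k) by (apply Nat.mod_upper_bound; lia);
      generalize dependent (Nat.modulo x k); generalize dependent (Nat.div x k); intros
  | |- context [Nat.div ?x ?k] =>
      let H := fresh in let H2 := fresh in
      assert (H := Nat.div_mod_eq x k); assert (H2 : lt (Nat.modulo x k) k) by (apply Nat.mod_upper_bound; lia);
      generalize dependent (Nat.modulo x k); generalize dependent (Nat.div x k); intros
  | H0 : context [Nat.div ?x ?k] |- _ =>
      let H := fresh in let H2 := fresh in
      assert (H := Nat.div_mod_eq x k); assert (H2 : lt (Nat.modulo x k) k) by (apply Nat.mod_upper_bound; lia);
      generalize dependent (Nat.modulo x k); generalize dependent (Nat.div x k); intros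
  end; lia.

(* ---------- Basel upper bound (Hofbauer) ---------- *)
Definition ang (n k : nat) : R := INR (2*k+1) * PI / 2^(n+2).
Definition csc2 (y : R) : R := / (sin y)^2.

Lemma ang_range n k : (k < 2^n)%nat -> 0 < ang n k < PI/2.
Proof.
  intros Hk. unfold ang. pose proof PI_RGT_0.
  assert (H1 : INR (2*k+1) < 2^(n+1)).
  { rewrite <- (pow_INR 2). apply lt_INR. rewrite Nat.pow_add_r. simpl. lia. }
  assert (H2 : 0 < INR (2*k+1)) by (apply lt_0_INR; lia).
  assert (E : 2^(n+2) = 2^(n+1)*2) by (replace (n+2)%nat with (S (n+1)) by lia; simpl; lra).
  split.
  - apply Rmult_lt_0_compat; [nra|]. apply Rinv_0_lt_compat, pow_lt; lra.
  - assert (0 < 2^(n+1)) by (apply pow_lt; lra).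
    rewrite E. unfold Rdiv. rewrite Rinv_mult.
    apply Rmult_lt_reg_r with (2^(n+1)*2); [nra|].
    field_simplify; [|lra]. nra.
Qed.

Lemma csc2_half y : 0 < y < PI -> csc2 y = /4 * (csc2 (y/2) + csc2 (PI/2 - y/2)).
Proof.
  intros [H1 H2]. unfold csc2. rewrite sin_shift.
  assert (Hs : 0 < sin (y/2)) by (apply sin_gt_0; lra).
  assert (Hc : 0 < cos (y/2)) by (apply cos_gt_0; lra).
  assert (Hsc : sin (y/2) ^ 2 + cos (y/2) ^ 2 = 1) by (pose proof (sin2_cos2 (y/2)); unfold Rsqr in *; lra).
  replace y with (2 * (y/2)) at 1 by field. rewrite sin_2a.
  transitivity ((sin (y/2) ^ 2 + cos (y/2) ^ 2) / (4 * sin (y/2)^2 * cos (y/2)^2)).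
  - rewrite Hsc. field. split; lra.
  - field. split; lra.
Qed.

Lemma pow2_S n : 2 ^ (S n) = 2 * 2 ^ n.
Proof. reflexivity. Qed.

Lemma ang_S n k : ang (S n) k = ang n k / 2.
Proof. unfold ang. replace (S n + 2)%nat with (S (n+2)) by lia. rewrite pow2_S.
  field. apply pow_nonzero. lra. Qed.

Lemma INR_pow2 m : INR (2^m) = 2^m.
Proof. rewrite pow_INR. reflexivity. Qed.

Lemma ang_S_rev n k : (k < 2^n)%nat -> ang (S n) (2^(S n) - 1 - k) = PI/2 - ang n k / 2.
Proof.
  intros Hk. unfold ang.
  assert (E : (2 * (2 ^ S n - 1 - k) + 1 + (2*k+1) = 2^(n+2))%nat).
  { replace (n+2)%nat with (S (S n)) by lia. simpl. simpl in Hk. lia. }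
  assert (E2 : INR (2 * (2 ^ S n - 1 - k) + 1) = 2^(n+2) - INR (2*k+1)).
  { rewrite <- INR_pow2. rewrite <- E. rewrite (plus_INR (2 * (2 ^ S n - 1 - k) + 1)). lra. }
  rewrite E2. replace (S n + 2)%nat with (S (n+2)) by lia. rewrite pow2_S.
  field. apply pow_nonzero. lra.
Qed.

Definition gsum (n : nat) : R := rsum (fun k => csc2 (ang n k)) (2^n).

Lemma gsum_S n : gsum (S n) = 4 * gsum n.
Proof.
  unfold gsum. replace (2 ^ S n)%nat with (2^n + 2^n)%nat by (simpl; lia).
  rewrite rsum_app.
  rewrite <- (rsum_rev (fun k => csc2 (ang (S n) (2 ^ n + k)))).
  rewrite <- rsum_plus. rewrite <- rsum_scal. apply rsum_ext. intros k Hk.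
  replace (2 ^ n + (2 ^ n - 1 - k))%nat with (2 ^ S n - 1 - k)%nat by (simpl; lia).
  rewrite ang_S_rev by assumption. rewrite ang_S.
  pose proof (ang_range n k Hk). rewrite (csc2_half (ang n k)) by lra. field.
Qed.

Lemma gsum_0 : gsum 0 = 2.
Proof.
  unfold gsum. simpl. unfold ang, csc2. simpl.
  replace (1 * PI / (2 * (2 * 1))) with (PI/4) by field.
  rewrite sin_PI4. 
  assert (H := sqrt_sqrt 2). assert (0 < sqrt 2) by (apply sqrt_lt_R0; lra).
  field_simplify; [|lra]. simpl. rewrite Rmult_1_r. apply H. lra.
Qed.

Lemma gsum_val n : gsum n = 2 * (2^n)^2.
Proof. induction n. - rewrite gsum_0. simpl. lra. - rewrite gsum_S, IHn. rewrite pow2_S. ring. Qed.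

Lemma csc2_ge y : 0 < y < PI -> / y ^ 2 <= csc2 y.
Proof. intros [H1 H2]. unfold csc2. assert (0 < sin y) by (apply sin_gt_0; lra).
  assert (sin y < y) by (apply sin_lt_x; lra).
  apply Rinv_le_contravar; [apply pow_lt; lra|]. nra. Qed.

Lemma odd_bound_pow n : rsum (fun k => / INR (2*k+1) ^ 2) (2^n) <= PI^2/8.
Proof.
  pose proof PI_RGT_0 as HP.
  assert (Hpos : 0 < 2^n) by (apply pow_lt; lra).
  assert (H : rsum (fun k => / (ang n k) ^ 2) (2^n) <= gsum n).
  { unfold gsum. apply rsum_le. intros k Hk. pose proof (ang_range n k Hk). apply csc2_ge. lra. }
  assert (E : rsum (fun k => / (ang n k) ^ 2) (2^n) = (16 * (2^n)^2 / PI^2) * rsum (fun k => / INR (2*k+1) ^ 2) (2^n)).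
  { rewrite <- rsum_scal. apply rsum_ext. intros k Hk. unfold ang.
    assert (0 < INR (2*k+1)) by (apply lt_0_INR; lia).
    replace (n+2)%nat with (S (S n)) by lia. rewrite !pow2_S. field. lra. }
  rewrite E, gsum_val in H.
  assert (0 < 16 * (2^n)^2 / PI^2) by (apply Rdiv_lt_0_compat; nra).
  apply Rmult_le_reg_l with (16 * (2^n)^2 / PI^2); [assumption|].
  replace (16 * (2 ^ n) ^ 2 / PI ^ 2 * (PI ^ 2 / 8)) with (2 * (2^n)^2) by (field; lra).
  exact H.
Qed.

Lemma odd_bound K : rsum (fun k => / INR (2*k+1) ^ 2) K <= PI^2/8.
Proof.
  eapply Rle_trans; [|apply (odd_bound_pow K)]. apply rsum_mono.
  - apply Nat.lt_le_incl, Nat.pow_gt_lin_r; lia.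
  - intros k. left. apply Rinv_0_lt_compat. apply pow_lt. apply lt_0_INR. lia.
Qed.

Definition fo (q : nat) : R := if (q mod 2 =? 1)%nat then / INR q ^ 2 else 0.
Definition f6 (q : nat) : R := if andb (q mod 2 =? 1)%nat (negb (q mod 3 =? 0)%nat) then / INR q ^ 2 else 0.
Definition fT (q : nat) : R := if andb (andb (2 <=? q)%nat (q mod 2 =? 1)%nat) (negb (q mod 3 =? 0)%nat) then / INR q ^ 2 else 0.

Lemma inv_sq_nonneg q : 0 <= / INR q ^ 2.
Proof. destruct q. simpl. rewrite Rmult_0_l, Rinv_0. lra.
  left. apply Rinv_0_lt_compat, pow_lt, lt_0_INR. lia. Qed.

Lemma fo_nonneg q : 0 <= fo q.
Proof. unfold fo. destruct (_ =? _)%nat; [apply inv_sq_nonneg|lra]. Qed.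
Lemma f6_nonneg q : 0 <= f6 q.
Proof. unfold f6. destruct (andb _ _); [apply inv_sq_nonneg|lra]. Qed.
Lemma fT_nonneg q : 0 <= fT q.
Proof. unfold fT. destruct (andb _ _); [apply inv_sq_nonneg|lra]. Qed.

Lemma fo_bound M : rsum fo M <= PI^2/8.
Proof.
  apply Rle_trans with (rsum fo (2*M)). { apply rsum_mono; [lia|apply fo_nonneg]. }
  rewrite rsum_2. eapply Rle_trans; [|apply (odd_bound M)]. right. apply rsum_ext. intros t Ht.
  unfold fo. replace ((2*t) mod 2)%nat with 0%nat by modlia.
  replace ((2*t+1) mod 2)%nat with 1%nat by modlia. simpl. lra.
Qed.

Lemma E3 M : rsum fo (3*M) = rsum f6 (3*M) + /9 * rsum fo M.
Proof.
  rewrite !rsum_3, <- rsum_scal, <- rsum_plus. apply rsum_ext. intros t Ht.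
  unfold fo, f6.
  replace ((3*t) mod 3)%nat with 0%nat by modlia.
  replace ((3*t+1) mod 3)%nat with 1%nat by modlia.
  replace ((3*t+2) mod 3)%nat with 2%nat by modlia.
  replace ((3*t) mod 2)%nat with (t mod 2)%nat by modlia.
  simpl (negb _). rewrite !Bool.andb_true_r, !Bool.andb_false_r.
  destruct (t mod 2 =? 1)%nat eqn:Et.
  - apply Nat.eqb_eq in Et. assert (t <> 0%nat) by (intro; subst; simpl in Et; lia).
    rewrite mult_INR. simpl (INR 3). assert (0 < INR t) by (apply lt_0_INR; lia).
    field. lra.
  - lra.
Qed.

Lemma f6_le_fo q : f6 q <= fo q.
Proof. unfold f6, fo. destruct (q mod 2 =? 1)%nat; simpl.
  - destruct (negb _); [lra|apply inv_sq_nonneg].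
  - lra. Qed.

Lemma geo j K : rsum f6 K * (9/8) * (1 - (/9)^(S j)) <= rsum fo (3^j * K).
Proof.
  induction j.
  - simpl. rewrite Nat.add_0_r. replace (rsum f6 K * (9 / 8) * (1 - / 9 * 1)) with (rsum f6 K) by field.
    apply rsum_le. intros; apply f6_le_fo.
  - replace (3 ^ S j * K)%nat with (3 * (3^j * K))%nat by (simpl; lia).
    rewrite E3.
    assert (rsum f6 K <= rsum f6 (3 * (3 ^ j * K))).
    { apply rsum_mono; [|apply f6_nonneg]. assert (1 <= 3^j)%nat by (apply Nat.neq_0_lt_0, Nat.pow_nonzero; lia). nia. }
    replace (rsum f6 K * (9 / 8) * (1 - (/ 9) ^ S (S j))) with
      (rsum f6 K + / 9 * (rsum f6 K * (9 / 8) * (1 - (/ 9) ^ S j))) by (simpl; field).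
    lra.
Qed.

Lemma PI_gt3 : 3 < PI.
Proof. pose proof PI2_3_2. lra. Qed.

Lemma S6_bound K : rsum f6 K <= PI^2/9.
Proof.
  set (s := rsum f6 K).
  destruct (Rle_or_lt s (PI^2/9)) as [H|H]; [exact H|exfalso].
  pose proof PI_gt3.
  assert (Hs : 0 < s) by nra.
  set (d := (s - PI^2/9) / s).
  assert (Hd : 0 < d) by (apply Rdiv_lt_0_compat; lra).
  assert (Hr : Rabs (/9) < 1) by (rewrite Rabs_right; lra).
  destruct (pow_lt_1_zero (/9) Hr d Hd) as [N HN].
  specialize (HN (S N) ltac:(lia)). rewrite Rabs_right in HN by (left; apply pow_lt; lra).
  pose proof (geo N K) as G. pose proof (fo_bound (3^N * K)) as B.
  fold s in G.
  assert (s * (1 - (/9)^(S N)) > s * (1 - d)) by (apply Rmult_lt_compat_l; lra).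
  assert (s * (1 - d) = PI^2/9) by (unfold d; field; lra).
  nra.
Qed.

Lemma fT_rel K : rsum f6 (S (S K)) = 1 + rsum fT (S (S K)).
Proof.
  induction K.
  - simpl. unfold f6, fT. simpl. field.
  - change (rsum f6 (S (S (S K)))) with (rsum f6 (S (S K)) + f6 (S (S K))).
    change (rsum fT (S (S (S K)))) with (rsum fT (S (S K)) + fT (S (S K))).
    assert (f6 (S (S K)) = fT (S (S K))).
    { unfold f6, fT. replace (2 <=? S (S K))%nat with true by (symmetry; apply Nat.leb_le; lia). reflexivity. }
    rewrite IHK. lra.
Qed.

Lemma fT_bound K : rsum fT K <= PI^2/9 - 1.
Proof.
  apply Rle_trans with (rsum fT (S (S K))). { apply rsum_mono; [lia|apply fT_nonneg]. }
  pose proof (fT_rel K). pose proof (S6_bound (S (S K))). lra.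
Qed.

Definition Tset (t : R) : Prop := exists K, t = rsum fT K.

Lemma Tset_bound : bound Tset.
Proof. exists (PI^2/9 - 1). intros t [K ->]. apply fT_bound. Qed.

Lemma Tset_ne : exists t, Tset t.
Proof. exists 0. exists 0%nat. reflexivity. Qed.

Definition Tval : R := proj1_sig (completeness Tset Tset_bound Tset_ne).

Lemma Tval_lub : is_lub Tset Tval.
Proof. unfold Tval. destruct (completeness _ _ _). exact i. Qed.

Lemma T_ub K : rsum fT K <= Tval.
Proof. destruct Tval_lub as [H _]. apply H. exists K. reflexivity. Qed.

Lemma T_approx d : 0 < d -> exists K, Tval - d < rsum fT K.
Proof.
  intros Hd. destruct (Classical_Prop.classic (exists K, Tval - d < rsum fT K)) as [H|H]; [exact H|].
  exfalso. destruct Tval_lub as [_ H2].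
  assert (Tval <= Tval - d); [|lra].
  apply H2. intros t [K ->]. apply Rnot_lt_le. intro. apply H. exists K. exact H0.
Qed.

Lemma T_le : Tval <= PI^2/9 - 1.
Proof. destruct Tval_lub as [_ H2]. apply H2. intros t [K ->]. apply fT_bound. Qed.

Lemma T_ge0 : 0 <= Tval.
Proof. apply (T_ub 0). Qed.

Lemma T_lt1 : Tval < 1.
Proof. pose proof T_le. pose proof PI_4. pose proof PI_RGT_0. nra. Qed.

From Stdlib Require Import Bool.
Import ListNotations.
Open Scope nat_scope.

Definition sqfb (n : nat) : bool :=
  andb (1 <=? n) (forallb (fun d => negb (n mod (d*d) =? 0)) (seq 2 n)).

Lemma forallb_false_ex {A} (f : A -> bool) l : forallb f l = false -> exists x, In x l /\ f x = false.
Proof. induction l; simpl; [discriminate|]. intros H. destruct (f a) eqn:E; simpl in H.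
  - destruct (IHl H) as [x [? ?]]. eauto. - eauto. Qed.

Lemma sqfb_spec n : sqfb n = true <-> squarefree n.
Proof.
  unfold sqfb, squarefree. split.
  - intros H. apply andb_prop in H as [H1 H2]. apply Nat.leb_le in H1. split; [exact H1|].
    intros d Hd. destruct d as [|[|d]].
    + destruct Hd as [z Hz]. lia.
    + reflexivity.
    + exfalso. assert (Hle : S (S d) * S (S d) <= n) by (apply Nat.divide_pos_le; [lia|exact Hd]).
      rewrite forallb_forall in H2. specialize (H2 (S (S d))).
      assert (Hin : In (S (S d)) (seq 2 n)) by (apply in_seq; nia).
      specialize (H2 Hin). apply negb_true_iff, Nat.eqb_neq in H2. apply H2.
      apply Nat.Lcm0.mod_divide. exact Hd.
  - intros [H1 H2]. apply andb_true_intro. split; [apply Nat.leb_le; exact H1|].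
    apply forallb_forall. intros d Hd. apply in_seq in Hd. apply negb_true_iff, Nat.eqb_neq.
    intros E. apply Nat.Lcm0.mod_divide in E. apply H2 in E. lia.
Qed.

Lemma not_sqf_ex n : 1 <= n -> sqfb n = false -> exists d, 2 <= d /\ Nat.divide (d*d) n.
Proof.
  intros H1 H. unfold sqfb in H. replace (1 <=? n) with true in H by (symmetry; apply Nat.leb_le; lia).
  simpl in H. apply forallb_false_ex in H as [d [Hd E]]. apply in_seq in Hd.
  apply negb_false_iff, Nat.eqb_eq in E. exists d. split; [lia|]. apply Nat.Lcm0.mod_divide. exact E.
Qed.

Lemma decomp n : 1 <= n -> exists q s, 1 <= q /\ squarefree s /\ n = q*q*s.
Proof.
  induction n as [n IH] using (well_founded_induction lt_wf). intros Hn.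
  destruct (sqfb n) eqn:E.
  - exists 1, n. split; [lia|]. split; [apply sqfb_spec; exact E|lia].
  - destruct (not_sqf_ex n Hn E) as [d [Hd [z Hz]]].
    assert (Hz1 : 1 <= z) by (destruct z; simpl in Hz; lia).
    assert (Hd4 : 4 <= d*d) by nia. assert (Hzn : z < n) by nia.
    destruct (IH z Hzn Hz1) as [q [s [Hq [Hs Ez]]]].
    exists (d*q), s. split; [nia|]. split; [exact Hs|]. subst. nia.
Qed.

Lemma key_sq x y u v : 1 <= x -> Nat.gcd x y = 1 -> squarefree v -> x*x*u = y*y*v -> x = 1.
Proof.
    intros Hx Hxy Hv Exy.
    assert (D1 : Nat.divide x v).
    { apply (Nat.gauss x y v); [|exact Hxy]. apply (Nat.gauss x y (y*v)); [|exact Hxy].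
      exists (x*u). nia. }
    destruct D1 as [t Ht]. subst v.
    assert (E3 : x*u = y*y*t) by (apply (Nat.mul_cancel_l _ _ x); [lia|]; nia).
    assert (D2 : Nat.divide x t).
    { apply (Nat.gauss x y t); [|exact Hxy]. apply (Nat.gauss x y (y*t)); [|exact Hxy].
      exists u. nia. }
    destruct D2 as [t' Ht']. subst t.
    destruct Hv as [_ Hv]. apply Hv. exists t'. nia.
Qed.

Lemma uniq_q q s q' s' : 1 <= q -> 1 <= q' -> squarefree s -> squarefree s' ->
  q*q*s = q'*q'*s' -> q = q'.
Proof.
  intros Hq Hq' Hs Hs' E.
  set (g := Nat.gcd q q').
  assert (Hg : g <> 0) by (unfold g; intro H; apply Nat.gcd_eq_0 in H; lia).
  destruct (Nat.gcd_divide_l q q') as [a Ha]. destruct (Nat.gcd_divide_r q q') as [a' Ha'].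
  fold g in Ha, Ha'.
  assert (Hco : Nat.gcd a a' = 1).
  { assert (q / g = a) by (rewrite Ha; apply Nat.div_mul; exact Hg).
    assert (q' / g = a') by (rewrite Ha'; apply Nat.div_mul; exact Hg).
    rewrite <- H, <- H0. apply Nat.gcd_div_gcd; [exact Hg|reflexivity]. }
  assert (E2 : a*a*s = a'*a'*s').
  { apply (Nat.mul_cancel_l _ _ (g*g)); [nia|]. rewrite Ha, Ha' in E. nia. }
  assert (Ea : a = 1) by (apply (key_sq a a' s s'); [destruct a; nia|exact Hco|exact Hs'|exact E2]).
  assert (Ea' : a' = 1).
  { apply (key_sq a' a s' s); [destruct a'; nia| rewrite Nat.gcd_comm; exact Hco|exact Hs|lia]. }
  rewrite Ha, Ha', Ea, Ea'. reflexivity.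
Qed.

Definition isQ (c : nat) : bool := orb (c mod 4 =? 0) (c mod 9 =? 0).
Definition qcond (q : nat) : bool := andb (andb (2 <=? q) (q mod 2 =? 1)) (negb (q mod 3 =? 0)).
Definition wv (v : nat) : nat := if v =? 13 then 25 else if v =? 25 then 13 else 1.
Definition cq (c q : nat) : nat := (c * wv ((q*q) mod 36)) mod 36.

Definition fc1 : bool := forallb (fun r => implb (andb (r mod 2 =? 1) (negb (r mod 3 =? 0)))
   (let v := (r*r) mod 36 in orb (v =? 1) (orb (v =? 13) (v =? 25)))) (seq 0 36).
Lemma fc1_ok : fc1 = true. Proof. vm_compute. reflexivity. Qed.

Definition fc2 : bool := forallb (fun v => forallb (fun r => forallb (fun c =>
   Bool.eqb (r =? (c * wv v) mod 36) ((v*r) mod 36 =? c)) (seq 0 36)) (seq 0 36)) [1;13;25].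
Lemma fc2_ok : fc2 = true. Proof. vm_compute. reflexivity. Qed.

Definition fc3 : bool := forallb (fun v => forallb (fun c =>
   implb (negb (isQ c)) (negb (isQ ((c * wv v) mod 36)))) (seq 0 36)) [1;13;25].
Lemma fc3_ok : fc3 = true. Proof. vm_compute. reflexivity. Qed.

Lemma in36 r : r < 36 -> In r (seq 0 36).
Proof. intros; apply in_seq; lia. Qed.

Lemma FC1 r : r < 36 -> r mod 2 = 1 -> r mod 3 <> 0 ->
  (r*r) mod 36 = 1 \/ (r*r) mod 36 = 13 \/ (r*r) mod 36 = 25.
Proof.
  intros H1 H2 H3. pose proof (proj1 (forallb_forall _ _) fc1_ok r (in36 r H1)) as H.
  cbv beta in H. rewrite H2 in H. apply Nat.eqb_neq in H3. rewrite H3 in H. cbn [Nat.eqb andb negb implb] in H.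
  repeat rewrite orb_true_iff in H. repeat rewrite Nat.eqb_eq in H. exact H.
Qed.

Lemma FC2 v r c : (v = 1 \/ v = 13 \/ v = 25) -> r < 36 -> c < 36 ->
  (r = (c * wv v) mod 36 <-> (v*r) mod 36 = c).
Proof.
  intros Hv Hr Hc.
  assert (H : Bool.eqb (r =? (c * wv v) mod 36) ((v*r) mod 36 =? c) = true).
  { pose proof fc2_ok as F. unfold fc2 in F. rewrite forallb_forall in F.
    assert (Hin : In v [1;13;25]) by (simpl; lia).
    specialize (F v Hin). rewrite forallb_forall in F. specialize (F r (in36 r Hr)).
    rewrite forallb_forall in F. exact (F c (in36 c Hc)). }
  apply eqb_prop in H. rewrite <- !Nat.eqb_eq. rewrite H. tauto.
Qed.

Lemma FC3 v c : (v = 1 \/ v = 13 \/ v = 25) -> c < 36 -> isQ c = false -> isQ ((c * wv v) mod 36) = false.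
Proof.
  intros Hv Hc HQ. pose proof fc3_ok as F. unfold fc3 in F. rewrite forallb_forall in F.
  assert (Hin : In v [1;13;25]) by (simpl; lia).
  specialize (F v Hin). rewrite forallb_forall in F. specialize (F c (in36 c Hc)).
  rewrite HQ in F. simpl in F. apply negb_true_iff in F. exact F.
Qed.

Lemma qq_mod q : q mod 2 = 1 -> q mod 3 <> 0 ->
  let v := (q*q) mod 36 in v = 1 \/ v = 13 \/ v = 25.
Proof.
  intros H2 H3 v. unfold v. rewrite Nat.Div0.mul_mod.
  apply FC1; [apply Nat.mod_upper_bound; lia|modlia|modlia].
Qed.

Lemma class_eq q s c : q mod 2 = 1 -> q mod 3 <> 0 -> c < 36 ->
  (s mod 36 = cq c q <-> (q*q*s) mod 36 = c).
Proof.
  intros H2 H3 Hc. unfold cq.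
  rewrite (Nat.Div0.mul_mod (q*q) s).
  apply FC2; [apply qq_mod; assumption|apply Nat.mod_upper_bound; lia|exact Hc].
Qed.

Lemma cq_notQ q c : q mod 2 = 1 -> q mod 3 <> 0 -> c < 36 -> isQ c = false ->
  isQ (cq c q) = false /\ cq c q < 36.
Proof.
  intros H2 H3 Hc HQ. split.
  - unfold cq. apply FC3; [apply qq_mod; assumption|exact Hc|exact HQ].
  - unfold cq. apply Nat.mod_upper_bound. lia.
Qed.

Lemma isQ_of_div4 n : Nat.divide 4 n -> isQ (n mod 36) = true.
Proof. intros [z ->]. unfold isQ. apply orb_true_intro. left. apply Nat.eqb_eq. modlia. Qed.
Lemma isQ_of_div9 n : Nat.divide 9 n -> isQ (n mod 36) = true.
Proof. intros [z ->]. unfold isQ. apply orb_true_intro. right. apply Nat.eqb_eq. modlia. Qed.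

Definition cnt (p : nat -> bool) (Z : nat) : nat := length (filter p (seq 1 Z)).

Lemma cnt_S p Z : cnt p (S Z) = cnt p Z + (if p (S Z) then 1 else 0).
Proof. unfold cnt. rewrite seq_S, filter_app, length_app. simpl. destruct (p (S Z)); reflexivity. Qed.

Lemma cnt_le p Z : cnt p Z <= Z.
Proof. unfold cnt. eapply Nat.le_trans; [apply filter_length_le|]. rewrite length_seq. lia. Qed.

Definition Fc (c : nat) := fun m => andb (m mod 36 =? c) (sqfb m).
Definition Gc (c : nat) := fun m => andb (m mod 36 =? c) (negb (sqfb m)).
Definition Ccp (c : nat) := fun m => (m mod 36 =? c).
Definition F c Z := cnt (Fc c) Z.
Definition G c Z := cnt (Gc c) Z.
Definition Cc c Z := cnt (Ccp c) Z.

Lemma FG_C c Z : F c Z + G c Z = Cc c Z.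
Proof. unfold F, G, Cc. induction Z; [reflexivity|]. rewrite !cnt_S.
  unfold Fc, Gc, Ccp in *. destruct (S Z mod 36 =? c); destruct (sqfb (S Z)); cbn [andb negb]; lia. Qed.

Lemma Cc_formula c Z : c < 36 -> Cc c Z = (Z + (36 - c) mod 36) / 36.
Proof.
  intros Hc. unfold Cc. induction Z.
  - change (cnt (Ccp c) 0) with 0. modlia.
  - rewrite cnt_S, IHZ. unfold Ccp. destruct (S Z mod 36 =? c) eqn:E.
    + apply Nat.eqb_eq in E. modlia.
    + apply Nat.eqb_neq in E. modlia.
Qed.

Lemma Cc_bounds c Z : c < 36 -> 36 * Cc c Z <= Z + 35 /\ Z <= 36 * Cc c Z + 35.
Proof. intros Hc. rewrite Cc_formula by exact Hc. modlia. Qed.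

Fixpoint nsum (f : nat -> nat) (n : nat) : nat :=
  match n with O => 0 | S m => nsum f m + f m end.

Lemma nsum_ext f g n : (forall k, k < n -> f k = g k) -> nsum f n = nsum g n.
Proof. induction n; simpl; intros H; [reflexivity|]. rewrite IHn by (intros; apply H; lia). rewrite H by lia. reflexivity. Qed.

Lemma nsum_plus f g n : nsum (fun k => f k + g k) n = nsum f n + nsum g n.
Proof. induction n; simpl; [reflexivity|]. rewrite IHn. lia. Qed.

Lemma nsum_zero n : nsum (fun _ => 0) n = 0.
Proof. induction n; simpl; lia. Qed.

Lemma nsum_ind (p : nat -> bool) n : nsum (fun k => if p k then 1 else 0) n = length (filter p (seq 0 n)).
Proof. induction n; [reflexivity|]. simpl nsum. rewrite IHn, seq_S, filter_app, length_app. simpl.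
  destruct (p n); reflexivity. Qed.

Lemma filter_all_false {A} (p : A -> bool) l : (forall x, In x l -> p x = false) -> filter p l = [].
Proof. induction l; simpl; intros H; [reflexivity|]. rewrite H by auto. apply IHl. auto. Qed.

Lemma len1 {A} (l : list A) q : NoDup l -> In q l -> (forall x, In x l -> x = q) -> length l = 1.
Proof.
  intros Hn Hq Hall. assert (length l <= length [q]).
  { apply NoDup_incl_length; [exact Hn|]. intros x Hx. rewrite (Hall x Hx). simpl; auto. }
  destruct l; [destruct Hq|]. simpl in *. lia.
Qed.

Lemma divS q Z : 1 <= q -> S Z / (q*q) = Z / (q*q) + (if S Z mod (q*q) =? 0 then 1 else 0).
Proof.
  intros Hq. set (k := q*q). assert (Hk : 1 <= k) by (unfold k; nia). clearbody k.
  pose proof (Nat.div_mod_eq (S Z) k) as E1. pose proof (Nat.mod_upper_bound (S Z) k ltac:(lia)) as B1.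
  destruct (S Z mod k =? 0) eqn:E.
  - apply Nat.eqb_eq in E. rewrite E in E1.
    assert (Ha : 1 <= S Z / k) by (destruct (S Z / k); nia).
    symmetry. rewrite Nat.add_1_r. replace (S Z / k) with (S (S Z / k - 1)) by lia. f_equal.
    symmetry. apply (Nat.div_unique Z k (S Z / k - 1) (k - 1)); [lia|]. nia.
  - apply Nat.eqb_neq in E. rewrite Nat.add_0_r.
    apply (Nat.div_unique Z k (S Z / k) (S Z mod k - 1)); lia.
Qed.

Lemma div_exact_qq q n : 1 <= q -> n mod (q*q) = 0 -> n = q*q*(n/(q*q)).
Proof. intros Hq H. pose proof (Nat.div_mod_eq n (q*q)). lia. Qed.

Lemma local_count c n B : c < 36 -> isQ c = false -> 1 <= n <= B ->
  nsum (fun q => if andb (qcond q) (andb (n mod (q*q) =? 0) (Fc (cq c q) (n/(q*q)))) then 1 else 0) (S B)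
  = if Gc c n then 1 else 0.
Proof.
  intros Hc HQ Hn. rewrite nsum_ind.
  set (p := fun q => andb (qcond q) (andb (n mod (q*q) =? 0) (Fc (cq c q) (n/(q*q))))).
  assert (Hp : forall x, p x = true -> 2 <= x /\ x mod 2 = 1 /\ x mod 3 <> 0 /\
              n = x*x*(n/(x*x)) /\ squarefree (n/(x*x)) /\ (n/(x*x)) mod 36 = cq c x).
  { intros x Hx. unfold p, qcond, Fc in Hx.
    apply andb_prop in Hx as [H1 H2]. apply andb_prop in H1 as [H1 H3]. apply andb_prop in H1 as [H1 H4].
    apply andb_prop in H2 as [H2 H5]. apply andb_prop in H5 as [H5 H6].
    apply Nat.leb_le in H1. apply Nat.eqb_eq in H4. apply negb_true_iff, Nat.eqb_neq in H3.
    apply Nat.eqb_eq in H2. apply Nat.eqb_eq in H5. apply sqfb_spec in H6.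
    refine (conj _ (conj _ (conj _ (conj _ (conj _ _))))); try assumption. apply div_exact_qq; [lia|exact H2]. }
  destruct (Gc c n) eqn:EG.
  - unfold Gc in EG. apply andb_prop in EG as [E1 E2]. apply Nat.eqb_eq in E1. apply negb_true_iff in E2.
    destruct (decomp n ltac:(lia)) as [q [s [Hq [Hs En]]]].
    assert (Hq2 : 2 <= q).
    { destruct (Nat.eq_dec q 1) as [e|e]; [|lia]. rewrite e, !Nat.mul_1_l in En. subst n.
      apply sqfb_spec in Hs. rewrite Hs in E2. discriminate. }
    assert (Hq_2 : q mod 2 = 1).
    { destruct (Nat.eq_dec (q mod 2) 1) as [e|e]; [exact e|exfalso].
      assert (Nat.divide 4 n).
      { assert (q mod 2 = 0) by (pose proof (Nat.mod_upper_bound q 2); lia).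
        exists ((q/2)*(q/2)*s). pose proof (Nat.div_mod_eq q 2). nia. }
      apply isQ_of_div4 in H. rewrite E1, HQ in H. discriminate. }
    assert (Hq_3 : q mod 3 <> 0).
    { intros e.
      assert (Nat.divide 9 n).
      { exists ((q/3)*(q/3)*s). pose proof (Nat.div_mod_eq q 3). nia. }
      apply isQ_of_div9 in H. rewrite E1, HQ in H. discriminate. }
    assert (Hdiv : n / (q*q) = s).
    { rewrite En. replace (q*q*s) with (s*(q*q)) by ring. apply Nat.div_mul. nia. }
    apply (len1 _ q).
    + apply NoDup_filter, seq_NoDup.
    + apply filter_In. split.
      * apply in_seq. assert (q <= q*q*s) by (destruct s; [destruct Hs; lia|nia]). lia.
      * unfold p, qcond, Fc. rewrite Hdiv.
        replace (2 <=? q) with true by (symmetry; apply Nat.leb_le; lia).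
        rewrite Hq_2. replace (q mod 3 =? 0) with false by (symmetry; apply Nat.eqb_neq; exact Hq_3).
        replace (n mod (q*q)) with 0 by (rewrite En; replace (q*q*s) with (s*(q*q)) by ring; symmetry; apply Nat.Div0.mod_mul).
        replace (s mod 36 =? cq c q) with true.
        2:{ symmetry. apply Nat.eqb_eq. apply class_eq; try assumption. rewrite <- En. exact E1. }
        apply sqfb_spec in Hs. rewrite Hs. reflexivity.
    + intros x Hx. apply filter_In in Hx as [_ Hx]. apply Hp in Hx as [H1 [_ [_ [H4 [H5 _]]]]].
      apply (uniq_q x (n/(x*x)) q s); try assumption; lia.
  - rewrite filter_all_false; [reflexivity|]. intros x _.
    destruct (p x) eqn:Ex; [|reflexivity]. exfalso.
    apply Hp in Ex as [H1 [H2 [H3 [H4 [H5 H6]]]]].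
    unfold Gc in EG.
    assert (Hc' : n mod 36 = c). { rewrite H4. apply class_eq; assumption. }
    assert (Hns : sqfb n = false).
    { destruct (sqfb n) eqn:E; [|reflexivity]. apply sqfb_spec in E. destruct E as [_ E].
      assert (x = 1) by (apply E; exists (n/(x*x)); rewrite H4 at 1; ring). lia. }
    rewrite Hc', Nat.eqb_refl, Hns in EG. discriminate.
Qed.

Definition term (c Z q : nat) : nat := if qcond q then F (cq c q) (Z/(q*q)) else 0.

Lemma recur c : c < 36 -> isQ c = false -> forall B Z, Z <= B ->
  G c Z = nsum (term c Z) (S B).
Proof.
  intros Hc HQ B Z. induction Z; intros HZ.
  - rewrite nsum_ext with (g := fun _ => 0); [rewrite nsum_zero; reflexivity|].
    intros k _. unfold term. destruct (qcond k); [|reflexivity]. rewrite Nat.Div0.div_0_l. reflexivity.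
  - unfold G. rewrite cnt_S. fold (G c Z). rewrite IHZ by lia.
    rewrite <- (local_count c (S Z) B Hc HQ ltac:(lia)). rewrite <- nsum_plus.
    apply nsum_ext. intros q _. unfold term.
    destruct (qcond q) eqn:Eq; [|reflexivity]. simpl.
    assert (Hq : 1 <= q) by (unfold qcond in Eq; apply andb_prop in Eq as [Eq _]; apply andb_prop in Eq as [Eq _]; apply Nat.leb_le in Eq; lia).
    destruct (S Z mod (q*q) =? 0) eqn:Ed.
    + assert (HD : S Z / (q*q) = S (Z/(q*q))) by (rewrite (divS q Z Hq), Ed; lia).
      cbn [andb]. rewrite HD. unfold F. rewrite cnt_S. reflexivity.
    + assert (HD : S Z / (q*q) = Z/(q*q)) by (rewrite (divS q Z Hq), Ed; lia).
      cbn [andb]. rewrite HD. lia.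
Qed.

From Stdlib Require Import ZArith.
Open Scope R_scope.

Lemma nat_above r : exists N : nat, r <= INR N.
Proof.
  destruct (archimed r) as [H1 H2].
  destruct (Z_le_gt_dec (up r) 0) as [Hz|Hz].
  - exists 0%nat. simpl. apply IZR_le in Hz. lra.
  - exists (Z.to_nat (up r)). rewrite INR_IZR_INZ, Z2Nat.id by lia. lra.
Qed.

Lemma INR_nsum f n : INR (nsum f n) = rsum (fun k => INR (f k)) n.
Proof. induction n; simpl nsum; simpl rsum; [reflexivity|]. rewrite plus_INR, IHn. reflexivity. Qed.

Lemma rsum_const a n : rsum (fun _ => a) n = INR n * a.
Proof. induction n; simpl rsum; [simpl; lra|]. rewrite IHn, S_INR. lra. Qed.

Lemma rsum_S f n : rsum f (S n) = rsum f n + f n.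
Proof. reflexivity. Qed.

Lemma tail_bound Q0 n : (1 <= Q0)%nat ->
  rsum (fun k => / INR (Q0 + 1 + k) ^ 2) n <= / INR Q0 - / INR (Q0 + n).
Proof.
  intros HQ. induction n.
  - simpl. rewrite Nat.add_0_r. lra.
  - rewrite rsum_S.
    assert (A : 1 <= INR (Q0 + n)) by (apply (le_INR 1); lia).
    assert (E1 : INR (Q0 + 1 + n) = INR (Q0+n) + 1) by (rewrite <- S_INR; f_equal; lia).
    assert (E2 : INR (Q0 + S n) = INR (Q0+n) + 1) by (rewrite <- S_INR; f_equal; lia).
    rewrite E1, E2. set (m := INR (Q0+n)) in *.
    assert (/ (m+1)^2 <= / m - / (m+1)).
    { replace (/ m - / (m+1)) with (/ (m*(m+1))) by (field; lra).
      apply Rinv_le_contravar; [nra|nra]. }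
    lra.
Qed.

Lemma tail_bound' Q0 n : (1 <= Q0)%nat -> rsum (fun k => / INR (Q0 + 1 + k) ^ 2) n <= / INR Q0.
Proof. intros H. pose proof (tail_bound Q0 n H).
  assert (0 < / INR (Q0 + n)) by (apply Rinv_0_lt_compat, lt_0_INR; lia). lra. Qed.

Definition goodc (c : nat) : Prop := (c < 36)%nat /\ isQ c = false.

Definition UBP (a : R) : Prop := forall d, 0 < d -> exists Z0 : nat, forall Z c, (Z0 <= Z)%nat -> goodc c ->
  INR (F c Z) <= (a + d) * INR Z / 36.
Definition LBP (b : R) : Prop := forall d, 0 < d -> exists Z0 : nat, forall Z c, (Z0 <= Z)%nat -> goodc c ->
  (b - d) * INR Z / 36 <= INR (F c Z).

Lemma G_sum c Z : goodc c -> INR (G c Z) = rsum (fun q => INR (term c Z q)) (S Z).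
Proof. intros [H1 H2]. rewrite (recur c H1 H2 Z Z (le_n _)). apply INR_nsum. Qed.

Lemma INR36 : INR 36 = 36. Proof. rewrite INR_IZR_INZ. reflexivity. Qed.
Lemma INR35 : INR 35 = 35. Proof. rewrite INR_IZR_INZ. reflexivity. Qed.

Lemma FGC_R c Z : goodc c -> INR (F c Z) + INR (G c Z) = INR (Cc c Z) /\
  36 * INR (Cc c Z) <= INR Z + 35 /\ INR Z <= 36 * INR (Cc c Z) + 35.
Proof.
  intros [H1 H2]. destruct (Cc_bounds c Z H1) as [B1 B2]. split; [rewrite <- plus_INR, FG_C; reflexivity|].
  split.
  - apply le_INR in B1. rewrite mult_INR, plus_INR, INR36, INR35 in B1. exact B1.
  - apply le_INR in B2. rewrite plus_INR, mult_INR, INR36, INR35 in B2. exact B2.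
Qed.

Lemma F_le c Z : INR (F c Z) <= INR Z.
Proof. apply le_INR, cnt_le. Qed.

Lemma F_nonneg c Z : 0 <= INR (F c Z).
Proof. apply pos_INR. Qed.

Lemma term_nonneg c Z q : 0 <= INR (term c Z q).
Proof. apply pos_INR. Qed.

Lemma div_R Z k : (1 <= k)%nat -> INR (Z / k) <= INR Z / INR k /\ INR Z / INR k - 1 <= INR (Z / k).
Proof.
  intros Hk. pose proof (Nat.div_mod_eq Z k) as E. pose proof (Nat.mod_upper_bound Z k ltac:(lia)) as B.
  assert (Hk' : 0 < INR k) by (apply lt_0_INR; lia).
  apply (f_equal INR) in E. rewrite plus_INR, mult_INR in E.
  apply lt_INR in B. pose proof (pos_INR (Z mod k)).
  split.
  - apply Rmult_le_reg_l with (INR k); [lra|]. field_simplify; [|lra]. lra.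
  - apply Rmult_le_reg_l with (INR k); [lra|]. field_simplify; [|lra]. lra.
Qed.

Lemma fT_qcond q : fT q = if qcond q then / INR q ^ 2 else 0.
Proof. reflexivity. Qed.

Lemma qcond_ge2 q : qcond q = true -> (2 <= q)%nat.
Proof. unfold qcond. intros H. apply andb_prop in H as [H _]. apply andb_prop in H as [H _]. apply Nat.leb_le; exact H. Qed.

Lemma qcond_unit q : qcond q = true -> (q mod 2 = 1)%nat /\ (q mod 3 <> 0)%nat.
Proof. unfold qcond. intros H. apply andb_prop in H as [H H3]. apply andb_prop in H as [_ H2].
  apply Nat.eqb_eq in H2. apply negb_true_iff, Nat.eqb_neq in H3. tauto. Qed.

Lemma good_cq c q : goodc c -> qcond q = true -> goodc (cq c q).
Proof. intros [H1 H2] Hq. destruct (qcond_unit q Hq). destruct (cq_notQ q c); try assumption. split; assumption. Qed.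

Lemma INR_qq q : INR (q*q) = INR q ^ 2.
Proof. rewrite mult_INR. ring. Qed.


Lemma R1 a : 0 <= a -> UBP a -> LBP (1 - a * Tval).
Proof.
  intros Ha HU d Hd.
  destruct (HU (d/3) ltac:(lra)) as [Z0 HZ0].
  destruct (nat_above (108/d)) as [Q1 HQ1]. set (Q0 := S Q1).
  assert (HQ0 : 108 / d <= INR Q0) by (unfold Q0; rewrite S_INR; lra).
  assert (HQ0p : 0 < INR Q0) by (apply lt_0_INR; unfold Q0; lia).
  assert (HinvQ : / INR Q0 <= d / 108).
  { replace (d/108) with (/ (108/d)) by (field; lra). apply Rinv_le_contravar; [apply Rdiv_lt_0_compat; lra|exact HQ0]. }
  destruct (nat_above (105/d)) as [Z1 HZ1].
  exists (Z0*(Q0*Q0) + Z1 + Q0)%nat.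
  intros Z c HZ Hc.
  destruct (FGC_R c Z Hc) as [E [B1 B2]].
  pose proof T_ge0. pose proof T_lt1.
  assert (HZpos : 0 <= INR Z) by apply pos_INR.
  assert (HG : INR (G c Z) <= (a + d/3) * INR Z / 36 * Tval + INR Z * / INR Q0).
  { rewrite G_sum by exact Hc.
    replace (S Z) with (S Q0 + (Z - Q0))%nat by lia. rewrite rsum_app.
    apply Rplus_le_compat.
    - apply Rle_trans with ((a + d/3) * INR Z / 36 * rsum fT (S Q0)).
      + rewrite <- rsum_scal. apply rsum_le. intros q Hq. unfold term. rewrite fT_qcond.
        destruct (qcond q) eqn:Eq.
        * pose proof (qcond_ge2 q Eq) as Hq2.
          assert (HW : (Z0 <= Z / (q*q))%nat).
          { apply Nat.div_le_lower_bound; [nia|]. assert (q*q <= Q0*Q0)%nat by nia. nia. }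
          specialize (HZ0 (Z/(q*q))%nat (cq c q) HW (good_cq c q Hc Eq)).
          destruct (div_R Z (q*q) ltac:(nia)) as [D1 _]. rewrite INR_qq in D1.
          eapply Rle_trans; [exact HZ0|].
          assert (0 < INR q) by (apply lt_0_INR; lia). assert (0 < INR q ^ 2) by (apply pow_lt; lra).
          replace ((a + d / 3) * INR Z / 36 * / INR q ^ 2) with ((a + d/3) * (INR Z / INR q ^ 2) / 36) by (field; lra).
          apply Rmult_le_compat_r; [lra|]. apply Rmult_le_compat_l; [lra|exact D1].
        * simpl. lra.
      + apply Rmult_le_compat_l; [|apply T_ub].
        apply Rmult_le_pos; [nra|lra].
    - apply Rle_trans with (INR Z * rsum (fun k => / INR (Q0 + 1 + k) ^ 2) (Z - Q0)).
      + rewrite <- rsum_scal. apply rsum_le. intros k Hk. unfold term.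
        destruct (qcond (S Q0 + k)) eqn:Eq; [|apply Rle_trans with 0; [right; reflexivity|apply Rmult_le_pos; [lra|apply inv_sq_nonneg]]].
        eapply Rle_trans; [apply F_le|].
        destruct (div_R Z ((S Q0 + k)*(S Q0 + k)) ltac:(nia)) as [D1 _]. rewrite INR_qq in D1.
        replace (Q0 + 1 + k)%nat with (S Q0 + k)%nat by lia. unfold Rdiv in D1. exact D1.
      + apply Rmult_le_compat_l; [lra|]. apply tail_bound'. unfold Q0; lia. }
  assert (HZ1' : 105 / d <= INR Z).
  { apply Rle_trans with (INR Z1); [exact HZ1|]. apply le_INR. lia. }
  assert (A1 : 35 <= d / 3 * INR Z).
  { apply Rmult_le_reg_l with (3/d); [apply Rdiv_lt_0_compat; lra|].
    replace (3 / d * (d / 3 * INR Z)) with (INR Z) by (field; lra).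
    replace (3 / d * 35) with (105/d) by (field; lra). exact HZ1'. }
  assert (A2 : INR Z * / INR Q0 <= d/108 * INR Z) by nra.
  assert (A3 : d / 3 * INR Z / 36 * Tval <= d/3 * INR Z / 36) by nra.
  nra.
Qed.

Lemma rsum_affine A B f K : rsum (fun q => A * f q - B) K = A * rsum f K - INR K * B.
Proof.
  rewrite (rsum_ext _ (fun q => A * f q + (- B))) by (intros; ring).
  rewrite rsum_plus, rsum_scal, rsum_const. ring.
Qed.

Lemma R2 b : 0 <= b <= 1 -> LBP b -> UBP (1 - b * Tval).
Proof.
  intros Hb HL d Hd. set (d1 := d/4).
  destruct (HL d1 ltac:(unfold d1; lra)) as [Z0 HZ0].
  destruct (T_approx d1 ltac:(unfold d1; lra)) as [K HK].
  destruct (nat_above ((70 + 2 * INR K)/d)) as [Z1 HZ1].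
  exists (Z0*(K*K) + Z1 + K)%nat.
  intros Z c HZ Hc.
  destruct (FGC_R c Z Hc) as [E [B1 B2]].
  pose proof T_ge0. pose proof T_lt1.
  assert (HZpos : 0 <= INR Z) by apply pos_INR.
  set (g := b - d1).
  assert (HSK : rsum fT K <= Tval) by apply T_ub.
  assert (HgS : b * Tval - 2 * d1 <= g * rsum fT K).
  { destruct (Rle_or_lt 0 g).
    - assert (g <= 1) by (unfold g, d1; lra). unfold g in *. nra.
    - unfold g in *. assert (0 <= rsum fT K) by (apply rsum_nonneg; intros; apply fT_nonneg). nra. }
  assert (HG : g * INR Z / 36 * rsum fT K - INR K * / 36 <= INR (G c Z)).
  { rewrite G_sum by exact Hc.
    apply Rle_trans with (rsum (fun q => INR (term c Z q)) K).
    2:{ apply rsum_mono; [lia|intros; apply term_nonneg]. }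
    rewrite <- rsum_affine. apply rsum_le. intros q Hq. unfold term. rewrite fT_qcond.
    destruct (qcond q) eqn:Eq.
    - pose proof (qcond_ge2 q Eq) as Hq2.
      assert (0 < INR q) by (apply lt_0_INR; lia). assert (0 < INR q ^ 2) by (apply pow_lt; lra).
      destruct (Rle_or_lt 0 g) as [Hg|Hg].
      + assert (HW : (Z0 <= Z / (q*q))%nat).
        { apply Nat.div_le_lower_bound; [nia|]. assert (q*q <= K*K)%nat by nia. nia. }
        specialize (HZ0 (Z/(q*q))%nat (cq c q) HW (good_cq c q Hc Eq)).
        destruct (div_R Z (q*q) ltac:(nia)) as [_ D2]. rewrite INR_qq in D2.
        fold g in HZ0. eapply Rle_trans; [|exact HZ0].
        assert (g <= 1) by (unfold g, d1; lra).
        replace (g * INR Z / 36 * / INR q ^ 2 - / 36) with ((g * (INR Z / INR q ^ 2) - 1) / 36) by (field; lra).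
        assert (g * (INR Z / INR q ^ 2 - 1) <= g * INR (Z / (q*q))) by (apply Rmult_le_compat_l; lra).
        nra.
      + pose proof (F_nonneg (cq c q) (Z / (q*q))).
        assert (g * INR Z / 36 * / INR q ^ 2 <= 0).
        { assert (0 <= INR Z / 36 * / INR q ^ 2) by (apply Rmult_le_pos; [lra|left; apply Rinv_0_lt_compat; lra]).
          nra. }
        lra.
    - apply Rle_trans with 0; [|right; reflexivity]. lra. }
  assert (HZ1' : (70 + 2 * INR K) / d <= INR Z).
  { apply Rle_trans with (INR Z1); [exact HZ1|]. apply le_INR. lia. }
  assert (A1 : 35 + INR K <= d / 2 * INR Z).
  { apply Rmult_le_reg_l with (2/d); [apply Rdiv_lt_0_compat; lra|].
    replace (2 / d * (d / 2 * INR Z)) with (INR Z) by (field; lra).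
    replace (2 / d * (35 + INR K)) with ((70 + 2 * INR K)/d) by (field; lra). exact HZ1'. }
  assert (A2 : (b * Tval - 2 * d1) * INR Z <= g * rsum fT K * INR Z) by (apply Rmult_le_compat_r; lra).
  unfold d1 in *. nra.
Qed.

Lemma UBP_1 : UBP 1.
Proof.
  intros d Hd. destruct (nat_above (35/d)) as [Z1 HZ1]. exists Z1. intros Z c HZ Hc.
  destruct (FGC_R c Z Hc) as [E [B1 B2]]. pose proof (pos_INR (G c Z)).
  assert (35 <= d * INR Z).
  { assert (35/d <= INR Z) by (apply Rle_trans with (INR Z1); [exact HZ1|apply le_INR; lia]).
    apply Rmult_le_reg_l with (/d); [apply Rinv_0_lt_compat; lra|].
    replace (/ d * (d * INR Z)) with (INR Z) by (field; lra). unfold Rdiv in *. lra. }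
  lra.
Qed.

Definition Lden : R := / (1 + Tval).

Lemma Lden_props : 1/2 < Lden <= 1 /\ 1 - Tval * Lden = Lden.
Proof.
  pose proof T_ge0. pose proof T_lt1. unfold Lden. split; [split|].
  - apply Rmult_lt_reg_l with (1 + Tval); [lra|]. field_simplify; lra.
  - apply Rmult_le_reg_l with (1 + Tval); [lra|]. field_simplify; lra.
  - field. lra.
Qed.

Lemma pow_le1 x n : 0 <= x <= 1 -> 0 <= x ^ n <= 1.
Proof. intros H. induction n; simpl; [lra|]. split; nra. Qed.

Lemma UBP_eq a a' : a = a' -> UBP a -> UBP a'.
Proof. intros ->; auto. Qed.
Lemma LBP_eq a a' : a = a' -> LBP a -> LBP a'.
Proof. intros ->; auto. Qed.

Lemma iterU k : UBP (Lden + Tval^(2*k) * (1 - Lden)).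
Proof.
  pose proof T_ge0. pose proof T_lt1. destruct Lden_props as [[HL1 HL2] HL3].
  induction k.
  - apply (UBP_eq 1); [simpl; ring|apply UBP_1].
  - pose proof (pow_le1 Tval (2*k) ltac:(lra)) as P.
    assert (Ha0 : 0 <= Lden + Tval ^ (2 * k) * (1 - Lden)) by nra.
    assert (LB := R1 _ Ha0 IHk).
    set (b := 1 - (Lden + Tval ^ (2 * k) * (1 - Lden)) * Tval) in LB.
    assert (Hb : 0 <= b <= 1) by (unfold b; split; nra).
    apply (UBP_eq (1 - b * Tval)); [|apply R2; assumption].
    unfold b. replace (2 * S k)%nat with (S (S (2*k))) by lia. simpl pow.
    unfold Lden. field. lra.
Qed.

Lemma iterL k : LBP (Lden - Tval^(2*k+1) * (1 - Lden)).
Proof.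
  pose proof T_ge0. pose proof T_lt1. destruct Lden_props as [[HL1 HL2] HL3].
  pose proof (pow_le1 Tval (2*k) ltac:(lra)) as P.
  apply (LBP_eq (1 - (Lden + Tval^(2*k) * (1 - Lden)) * Tval)); [|apply R1; [nra|apply iterU]].
  replace (2 * k + 1)%nat with (S (2*k)) by lia. simpl pow. unfold Lden. field. lra.
Qed.

Lemma Lden_ge : 9 / PI ^ 2 <= Lden.
Proof.
  pose proof T_ge0. pose proof T_le. pose proof PI_gt3. unfold Lden.
  assert (0 < PI^2) by nra.
  replace (9 / PI^2) with (/ (PI^2/9)) by (field; lra).
  apply Rinv_le_contravar; lra.
Qed.

Lemma density eta : 0 < eta -> exists Z0 : nat, forall Z c, (Z0 <= Z)%nat -> goodc c ->
  (Lden - eta) * INR Z / 36 <= INR (F c Z) /\ INR (F c Z) <= (Lden + eta) * INR Z / 36.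
Proof.
  intros He. pose proof T_ge0. pose proof T_lt1. destruct Lden_props as [[HL1 HL2] HL3].
  assert (Hr : Rabs Tval < 1) by (rewrite Rabs_right; lra).
  destruct (pow_lt_1_zero Tval Hr (eta/2) ltac:(lra)) as [N HN].
  specialize (HN (2*N)%nat ltac:(lia)). rewrite Rabs_right in HN by (apply Rle_ge, pow_le; lra).
  assert (HN1 : Tval ^ (2*N+1) <= Tval ^ (2*N)).
  { replace (2*N+1)%nat with (S (2*N)) by lia. change (Tval ^ S (2*N)) with (Tval * Tval ^ (2*N)). pose proof (pow_le1 Tval (2*N) ltac:(lra)). nra. }
  destruct (iterU N (eta/2) ltac:(lra)) as [Z1 H1].
  destruct (iterL N (eta/2) ltac:(lra)) as [Z2 H2].
  exists (Z1 + Z2)%nat. intros Z c HZ Hc.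
  specialize (H1 Z c ltac:(lia) Hc). specialize (H2 Z c ltac:(lia) Hc).
  pose proof (pos_INR Z). pose proof (pow_le Tval (2*N+1) ltac:(lra)).
  split.
  - eapply Rle_trans; [|exact H2]. apply Rmult_le_compat_r; [lra|]. apply Rmult_le_compat_r; [lra|]. nra.
  - eapply Rle_trans; [exact H1|]. apply Rmult_le_compat_r; [lra|]. apply Rmult_le_compat_r; [lra|]. nra.
Qed.


Lemma NS_interval eps : 0 < eps -> exists N0 : nat, forall N b c, (N0 <= N)%nat -> (b <= N)%nat -> goodc c ->
  INR (G c (b + N)) - INR (G c b) <= (1 - 9/PI^2 + eps/200) * INR N / 36.
Proof.
  intros He. set (eta := eps/1200).
  destruct (density eta ltac:(unfold eta; lra)) as [Z0 HD].
  destruct (nat_above (400/eps * (70 + 36 * INR Z0))) as [N1 HN1].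
  exists (Z0 + N1)%nat. intros N b c HN Hb Hc.
  pose proof Lden_ge.
  destruct (FGC_R c (b+N) Hc) as [E1 [B1 _]]. destruct (FGC_R c b Hc) as [E2 [_ B2]].
  destruct (HD (b+N)%nat c ltac:(lia) Hc) as [D1 _].
  assert (D2 : INR (F c b) <= (Lden + eta) * INR b / 36 + INR Z0).
  { destruct (le_lt_dec Z0 b) as [h|h].
    - destruct (HD b c h Hc) as [_ D]. pose proof (pos_INR Z0). lra.
    - pose proof (F_le c b). apply lt_INR in h. pose proof (pos_INR b).
      assert (0 <= (Lden + eta) * INR b / 36).
      { pose proof Lden_props as [[? ?] _]. apply Rmult_le_pos; [|lra]. apply Rmult_le_pos; unfold eta; lra. }
      lra. }
  rewrite plus_INR in *.
  assert (Hb' : INR b <= INR N) by (apply le_INR; exact Hb).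
  assert (HN' : 400/eps * (70 + 36 * INR Z0) <= INR N) by (apply Rle_trans with (INR N1); [exact HN1|apply le_INR; lia]).
  assert (A : 70 + 36 * INR Z0 <= eps / 400 * INR N).
  { apply Rmult_le_reg_l with (400/eps); [apply Rdiv_lt_0_compat; lra|].
    replace (400 / eps * (eps / 400 * INR N)) with (INR N) by (field; lra). exact HN'. }
  pose proof (pos_INR b). pose proof (pos_INR N). unfold eta in *.
  nra.
Qed.

Lemma floor_nat x : 0 <= x -> exists N : nat, INR N <= x < INR N + 1.
Proof.
  intros Hx. destruct (archimed x) as [H1 H2].
  assert (Hz : (1 <= up x)%Z).
  { apply Z.lt_pred_le. apply lt_IZR. simpl. lra. }
  exists (Z.to_nat (up x - 1)). rewrite INR_IZR_INZ, Z2Nat.id by lia.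
  rewrite minus_IZR. simpl. lra.
Qed.

Lemma cnt_app p b N : cnt p (b + N) = (cnt p b + length (filter p (seq (S b) N)))%nat.
Proof. unfold cnt. rewrite seq_app, filter_app, length_app. reflexivity. Qed.

Lemma sum_mod n b : ((n + b) mod 36 = ((n mod 36) + b) mod 36)%nat.
Proof. rewrite Nat.Div0.add_mod_idemp_l. reflexivity. Qed.

Lemma nine_pi : 9 / PI^2 < 1.
Proof. pose proof PI_gt3. assert (9 < PI^2) by nra. apply Rmult_lt_reg_r with (PI^2); [nra|].
  field_simplify; lra. Qed.

Lemma key_claim eps N0 x (A : list nat) N u b :
  0 < eps ->
  (forall N b c, (N0 <= N)%nat -> (b <= N)%nat -> goodc c ->
     INR (G c (b + N)) - INR (G c b) <= (1 - 9/PI^2 + eps/200) * INR N / 36) ->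
  (N0 <= N)%nat -> (1 <= N)%nat -> INR N <= x ->
  NoDup A -> (forall n, In n A -> (1 <= n)%nat /\ (n <= N)%nat) ->
  (forall a b, In a A -> In b A -> ~ squarefree (a + b)) ->
  inU eps x A u -> In b A -> isQ ((u + b) mod 36) = true.
Proof.
  intros He HNS HN0 HN1 HNx HA Hrange Hsq [Hu Hdel] Hb.
  destruct (isQ ((u + b) mod 36)) eqn:EQ; [reflexivity|exfalso].
  set (c := ((u + b) mod 36)%nat) in *.
  assert (Hc : goodc c) by (split; [apply Nat.mod_upper_bound; lia|exact EQ]).
  set (Au := filter (fun n => (n mod 36 =? u)%nat) A).
  assert (Hlen : (length Au <= length (filter (Gc c) (seq (S b) N)))%nat).
  { rewrite <- (length_map (fun n => n + b)%nat Au). apply NoDup_incl_length.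
    - apply NoDup_map_NoDup_ForallPairs; [|apply NoDup_filter; exact HA].
      intros x1 x2 _ _ E. lia.
    - intros m Hm. apply in_map_iff in Hm as [n [Em Hn]]. subst m.
      apply filter_In in Hn as [Hn Hnu]. apply Nat.eqb_eq in Hnu.
      destruct (Hrange n Hn) as [Hn1 Hn2].
      apply filter_In. split; [apply in_seq; lia|].
      unfold Gc. apply andb_true_intro. split.
      + apply Nat.eqb_eq. unfold c. rewrite sum_mod, Hnu. reflexivity.
      + apply negb_true_iff. destruct (sqfb (n + b)) eqn:Es; [|reflexivity].
        exfalso. apply (Hsq n b Hn Hb). apply sqfb_spec. exact Es. }
  assert (HbN : (b <= N)%nat) by (apply Hrange; exact Hb).
  specialize (HNS N b c HN0 HbN Hc).
  unfold G in HNS. rewrite cnt_app, plus_INR in HNS.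
  apply le_INR in Hlen.
  assert (Hcount : INR (count_res A u) <= (1 - 9/PI^2 + eps/200) * INR N / 36).
  { unfold count_res. fold Au. lra. }
  unfold delta in Hdel.
  assert (HNp : 0 < INR N) by (apply lt_0_INR; lia).
  assert (Hx : 0 < x) by lra.
  pose proof nine_pi. pose proof PI_RGT_0.
  assert (H1 : (1 - 9 / PI ^ 2 + eps / 100) * x < 36 * INR (count_res A u)).
  { apply Rmult_lt_reg_r with (/ x); [apply Rinv_0_lt_compat; lra|].
    replace ((1 - 9 / PI ^ 2 + eps / 100) * x * / x) with (1 - 9 / PI ^ 2 + eps / 100) by (field; lra).
    exact Hdel. }
  assert (H2 : (1 - 9 / PI ^ 2 + eps / 100) * INR N <= (1 - 9 / PI ^ 2 + eps / 100) * x)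
    by (apply Rmult_le_compat_l; lra).
  nra.
Qed.

Definition Pr (u1 u2 r : nat) : bool := andb (isQ ((u1 + r) mod 36)) (isQ ((u2 + r) mod 36)).
Definition condr (r a : nat) : bool :=
  andb (r mod 2 =? 0)%nat (andb (Bool.eqb (r mod 4 =? 2)%nat (r mod 9 =? a)%nat)
                               (Bool.eqb (r mod 4 =? 0)%nat ((r + a) mod 9 =? 0)%nat)).

Definition fcheck : bool :=
  forallb (fun u1 => forallb (fun u2 =>
    implb (andb (negb (u1 =? u2)%nat) (andb (Pr u1 u2 u1) (andb (Pr u1 u2 u2)
      (andb (existsb (fun r => andb (Pr u1 u2 r) (negb (r mod 4 =? 0)%nat)) (seq 0 36))
        (andb (existsb (fun r => andb (Pr u1 u2 r) (negb (r mod 9 =? 0)%nat)) (seq 0 36))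
              (existsb (fun r => andb (Pr u1 u2 r) (negb (r mod 4 =? 2)%nat)) (seq 0 36)))))))
      (existsb (fun a => forallb (fun r => implb (Pr u1 u2 r) (condr r a)) (seq 0 36)) (seq 1 8)))
   (seq 0 36)) (seq 0 36).

Lemma fcheck_ok : fcheck = true.
Proof. vm_compute. reflexivity. Qed.

Lemma ex_witness (A : list nat) (P : nat -> Prop) : ~ (forall n, In n A -> P n) -> exists n, In n A /\ ~ P n.
Proof. intros H. apply NNPP. intro H'. apply H. intros n Hn. apply NNPP. intro Hp. apply H'. eauto. Qed.

Lemma existsb_of (f : nat -> bool) l x : In x l -> f x = true -> existsb f l = true.
Proof. intros. apply existsb_exists. eauto. Qed.

Lemma inU_elem eps x A u : 0 < eps -> 0 < x -> inU eps x A u -> exists e, In e A /\ (e mod 36 = u)%nat.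
Proof.
  intros He Hx [Hu Hd]. unfold delta, count_res in Hd.
  destruct (filter (fun n => (n mod 36 =? u)%nat) A) as [|e l] eqn:Ef.
  - exfalso. change (length (@nil nat)) with 0%nat in Hd. change (INR 0) with 0 in Hd. pose proof nine_pi. unfold Rdiv in Hd. rewrite Rmult_0_r, Rmult_0_l in Hd. lra.
  - exists e. assert (In e (filter (fun n => (n mod 36 =? u)%nat) A)) by (rewrite Ef; left; reflexivity).
    apply filter_In in H as [H1 H2]. apply Nat.eqb_eq in H2. auto.
Qed.

Theorem lemma2 :
  forall eps : R, eps > 0 ->
  exists x0 : R, forall (x : R) (A : list nat),
    x >= x0 ->
    NoDup A ->
    (forall n, In n A -> (1 <= n)%nat /\ INR n <= x) ->
    INR (length A) > (delta0 + eps) * x ->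
    (forall a b, In a A -> In b A -> ~ squarefree (a + b)) ->
    ~ (forall n, In n A -> Nat.divide 4 n) ->
    ~ (forall n, In n A -> Nat.divide 9 n) ->
    ~ (forall n, In n A -> n mod 4 = 2%nat) ->
    (* |U| >= 2 *)
    (exists a1 a2 : nat, a1 <> a2 /\ inU eps x A a1 /\ inU eps x A a2) ->
    (forall n, In n A -> Nat.Even n) /\
    exists a : nat, (1 <= a <= 8)%nat /\
      forall n, In n A ->
        (n mod 4 = 2%nat <-> n mod 9 = a) /\
        (n mod 4 = 0%nat <-> (n + a) mod 9 = 0%nat).
Proof.
  intros eps He. destruct (NS_interval eps He) as [N0 HNS]. exists (INR N0 + 2).
  intros x A Hx HA Hr _ Hsq H4 H9 H2 [u1 [u2 [Hne [HU1 HU2]]]].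
  pose proof (pos_INR N0).
  destruct (floor_nat x ltac:(lra)) as [N [HN1 HN2]].
  assert (HN0 : (N0 < N)%nat) by (apply INR_lt; lra).
  assert (Hrange : forall n, In n A -> (1 <= n)%nat /\ (n <= N)%nat).
  { intros n Hn. destruct (Hr n Hn) as [h1 h2]. split; [exact h1|].
    assert (INR n < INR (S N)) by (rewrite S_INR; lra). apply INR_lt in H0. lia. }
  assert (KC : forall u b, inU eps x A u -> In b A -> isQ ((u + b) mod 36) = true).
  { intros u b Hu Hb. apply (key_claim eps N0 x A N u b); try assumption; try lia. }
  assert (Hxp : 0 < x) by lra.
  destruct (inU_elem eps x A u1 ltac:(lra) Hxp HU1) as [e1 [He1 Ee1]].
  destruct (inU_elem eps x A u2 ltac:(lra) Hxp HU2) as [e2 [He2 Ee2]].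
  assert (HP : forall n, In n A -> Pr u1 u2 (n mod 36) = true).
  { intros n Hn. unfold Pr. rewrite !Nat.Div0.add_mod_idemp_r. rewrite (KC u1 n HU1 Hn), (KC u2 n HU2 Hn). reflexivity. }
  destruct HU1 as [Hu1 _]. destruct HU2 as [Hu2 _].
  destruct (ex_witness A _ H4) as [n4 [Hn4 Hn4']].
  destruct (ex_witness A _ H9) as [n9 [Hn9 Hn9']].
  destruct (ex_witness A _ H2) as [n2 [Hn2 Hn2']].
  pose proof fcheck_ok as F. unfold fcheck in F. rewrite forallb_forall in F.
  specialize (F u1 (in36 u1 Hu1)). rewrite forallb_forall in F. specialize (F u2 (in36 u2 Hu2)).
  assert (B1 : negb (u1 =? u2)%nat = true) by (apply negb_true_iff, Nat.eqb_neq; exact Hne).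
  assert (B2 : Pr u1 u2 u1 = true) by (rewrite <- Ee1 at 2; apply HP; exact He1).
  assert (B3 : Pr u1 u2 u2 = true) by (rewrite <- Ee2 at 2; apply HP; exact He2).
  assert (B4 : existsb (fun r => andb (Pr u1 u2 r) (negb (r mod 4 =? 0)%nat)) (seq 0 36) = true).
  { apply (existsb_of _ _ (n4 mod 36)); [apply in36, Nat.mod_upper_bound; lia|].
    rewrite HP by exact Hn4. cbn [andb]. apply negb_true_iff, Nat.eqb_neq. intro E.
    apply Hn4'. apply Nat.Lcm0.mod_divide. modlia. }
  assert (B5 : existsb (fun r => andb (Pr u1 u2 r) (negb (r mod 9 =? 0)%nat)) (seq 0 36) = true).
  { apply (existsb_of _ _ (n9 mod 36)); [apply in36, Nat.mod_upper_bound; lia|].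
    rewrite HP by exact Hn9. cbn [andb]. apply negb_true_iff, Nat.eqb_neq. intro E.
    apply Hn9'. apply Nat.Lcm0.mod_divide. modlia. }
  assert (B6 : existsb (fun r => andb (Pr u1 u2 r) (negb (r mod 4 =? 2)%nat)) (seq 0 36) = true).
  { apply (existsb_of _ _ (n2 mod 36)); [apply in36, Nat.mod_upper_bound; lia|].
    rewrite HP by exact Hn2. cbn [andb]. apply negb_true_iff, Nat.eqb_neq. intro E.
    apply Hn2'. modlia. }
  rewrite B1, B2, B3, B4, B5, B6 in F. cbn [andb implb] in F.
 apply existsb_exists in F as [a [Ha Fa]].
  apply in_seq in Ha. rewrite forallb_forall in Fa.
  assert (Hc : forall n, In n A -> condr (n mod 36) a = true).
  { intros n Hn. specialize (Fa (n mod 36) (in36 _ ltac:(apply Nat.mod_upper_bound; lia))).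
    rewrite HP in Fa by exact Hn. exact Fa. }
  split.
  - intros n Hn. specialize (Hc n Hn). unfold condr in Hc.
    apply andb_prop in Hc as [Hc _]. apply Nat.eqb_eq in Hc.
    exists (n / 2)%nat. modlia.
  - exists a. split; [lia|]. intros n Hn. specialize (Hc n Hn). unfold condr in Hc.
    apply andb_prop in Hc as [_ Hc]. apply andb_prop in Hc as [Hc1 Hc2].
    apply eqb_prop in Hc1. apply eqb_prop in Hc2.
    replace ((n mod 36) mod 4)%nat with (n mod 4)%nat in Hc1, Hc2 by modlia.
    replace ((n mod 36) mod 9)%nat with (n mod 9)%nat in Hc1 by modlia.
    replace ((n mod 36 + a) mod 9)%nat with ((n + a) mod 9)%nat in Hc2 by modlia.
    split; split; intros E; apply Nat.eqb_eq in E.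
    + rewrite Hc1 in E. apply Nat.eqb_eq. exact E.
    + rewrite <- Hc1 in E. apply Nat.eqb_eq. exact E.
    + rewrite Hc2 in E. apply Nat.eqb_eq. exact E.
    + rewrite <- Hc2 in E. apply Nat.eqb_eq. exact E.
Qed.
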